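(* Fix a positive integer $c$. Let $\mathcal{H}_c$ be the graph whose vertex set consists of every nonempty Hilbert scheme $\mathrm{Hilb}^P(\mathbb{P}^n)$ parametrizing codimension $c$ subschemes of some projective space $\mathbb{P}^n$ (i.e. $P$ admissible and $n=c+\deg P$), and whose edges are all pairs $(\mathrm{Hilb}^P(\mathbb{P}^n),\mathrm{Hilb}^{\sigma(P)}(\mathbb{P}^n))$ and $(\mathrm{Hilb}^P(\mathbb{P}^n),\mathrm{Hilb}^{\lambda(P)}(\mathbb{P}^{n+1}))$ where $P$ is admissible and $n:=c+\deg P$. Then $\mathcal{H}_c$ is an infinite binary tree, with root $\mathrm{Hilb}^1(\mathbb{P}^c)$.
   Context: $\Bbbk$ is an algebraically closed field and $\mathrm{Hilb}^P(\mathbb{P}^n)$ is the Hilbert scheme parametrizing closed subschemes of $\mathbb{P}^n_\Bbbk$ with Hilbert polynomial $P$ (Hilbert schemes for distinct pairs $(n,P)$ are regarded as distinct vertices). Binomial coefficients are polynomials: $\binom{t+a}{b}=\frac{(t+a)\cdots(t+a-b+1)}{b!}$ for $b\ge0$, $0$ for $b<0$. An admissible Hilbert polynomial is the Hilbert polynomial of a nonempty closed subscheme of some projective space; each has a unique Gotzmann expression $P(t)=\sum_{j=1}^r\binom{t+b_j-(j-1)}{b_j}$ with $b_1\ge\dots\ge b_r\ge 0$. $\sigma(P):=1+P$ and $\lambda(P)$ is the admissible polynomial with Gotzmann expression $\sum_{j=1}^r\binom{t+b_j+1-(j-1)}{b_j+1}$. *)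

(* Defs.v *)
From mathcomp Require Import all_boot all_order all_algebra.
Set Implicit Arguments. Unset Strict Implicit. Unset Printing Implicit Defensive.
Import Order.TTheory GRing.Theory Num.Theory.
Local Open Scope ring_scope.

Definition binpoly (a : int) (b : nat) : {poly rat} :=
  (b`!%:R)^-1 *: \prod_(i < b) ('X + ((a - (i%:Z))%:~R)%:P).

(* sum_{j=1}^r binom(t + b_j - (j-1), b_j), with s = [:: b_1; ...; b_r] (0-indexed j) *)
Definition gotz (s : seq nat) : {poly rat} :=
  \sum_(j < size s) binpoly ((nth 0%N s j)%:Z - j%:Z) (nth 0%N s j).

Definition gotzmann_expr (P : {poly rat}) (s : seq nat) : Prop :=
  s <> [::] /\ sorted (fun a b : nat => (b <= a)%N) s /\ P = gotz s.

(* admissible Hilbert polynomial (via the Gotzmann expression characterization) *)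
Definition admissible (P : {poly rat}) : Prop := exists s, gotzmann_expr P s.

Definition sigmaP (P : {poly rat}) : {poly rat} := 1 + P.

Definition lambdaRel (P Q : {poly rat}) : Prop :=
  exists s, gotzmann_expr P s /\ Q = gotz (map S s).

Definition degP (P : {poly rat}) : nat := (size P).-1.

(* vertices of H_c: pairs (P, n) standing for Hilb^P(P^n), P admissible, n = c + deg P *)
Definition vertex (c : nat) (v : {poly rat} * nat) : Prop :=
  admissible v.1 /\ v.2 = (c + degP v.1)%N.

Definition hedge (c : nat) (v w : {poly rat} * nat) : Prop :=
  vertex c v /\
  (w = (sigmaP v.1, v.2) \/ (lambdaRel v.1 w.1 /\ w.2 = v.2.+1)).

Definition adj (c : nat) (v w : {poly rat} * nat) : Prop :=
  hedge c v w \/ hedge c w v.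

(* Main.v *)
Require Import Defs.
From mathcomp Require Import all_boot all_order all_algebra ring.
Set Implicit Arguments. Unset Strict Implicit. Unset Printing Implicit Defensive.
Import Order.TTheory GRing.Theory Num.Theory.
Local Open Scope ring_scope.

Lemma binpoly_XC (a : int) (b : nat) :
  binpoly a b = (b`!%:R)^-1 *: \prod_(i <- index_enum 'I_b) ('X - (- ((a - (i%:Z))%:~R))%:P).
Proof.
rewrite /binpoly; congr (_ *: _); apply: eq_bigr => i _.
by rewrite polyCN opprK.
Qed.

Lemma size_binpoly a b : size (binpoly a b) = b.+1.
Proof.
rewrite binpoly_XC size_scale ?size_prod_XsubC.
  by rewrite /index_enum -?enumT size_enum_ord.
by rewrite invr_eq0 pnatr_eq0 -lt0n fact_gt0.
Qed.

Lemma lead_binpoly a b : lead_coef (binpoly a b) = (b`!%:R)^-1.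
Proof. by rewrite binpoly_XC lead_coefZ lead_coef_prod_XsubC mulr1. Qed.

Lemma binpoly_shift a b : binpoly (a - 1) b = binpoly a b \Po ('X - 1).
Proof.
rewrite /binpoly comp_polyZ; congr (_ *: _).
rewrite -/(comp_poly ('X - 1) _) rmorph_prod; apply: eq_bigr => i _ /=.
rewrite comp_polyD comp_polyX comp_polyC.
have e : ((a - 1 - i%:Z)%:~R : rat) = (a - i%:Z)%:~R - 1.
  by rewrite !rmorphB /= rmorph1 addrAC.
rewrite e polyCB polyC1; ring.
Qed.

Lemma gotz_nil : gotz [::] = 0.
Proof. by rewrite /gotz big_ord0. Qed.

Lemma gotz_cons b s : gotz (b :: s) = binpoly b%:Z b + (gotz s \Po ('X - 1)).
Proof.
rewrite /gotz /= big_ord_recl /= subr0; congr (_ + _).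
rewrite -/(comp_poly ('X - 1) _) rmorph_sum; apply: eq_bigr => i _ /=.
rewrite -binpoly_shift add0n. 
by rewrite /bump /= add1n -addn1 PoszD opprD addrA.
Qed.

Lemma gotz_rcons0 s : gotz (rcons s 0%N) = 1 + gotz s.
Proof.
elim: s => [|b s IH] /=.
  rewrite gotz_cons gotz_nil comp_poly0 addr0 addr0 /binpoly big_ord0.
  by rewrite invr1 scale1r.
rewrite !gotz_cons IH comp_polyD comp_polyC addrCA.
by [].
Qed.

Definition geqR := (fun a b : nat => (b <= a)%N).

Lemma size_Xm1 : size ('X - 1 : {poly rat}) = 2%N.
Proof. by rewrite -polyC1 size_XsubC. Qed.

Lemma lead_Xm1 : lead_coef ('X - 1 : {poly rat}) = 1.
Proof. by rewrite -polyC1 lead_coefXsubC. Qed.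

Lemma lead_binpoly_gt0 a b : 0 < lead_coef (binpoly a b).
Proof. by rewrite lead_binpoly invr_gt0 ltr0n fact_gt0. Qed.

Lemma gotz_size s : sorted geqR s -> s != [::] ->
  size (gotz s) = (head 0%N s).+1 /\ 0 < lead_coef (gotz s).
Proof.
elim: s => [|b s IH] // srt _.
case: s IH srt => [|b' t] IH srt.
  rewrite gotz_cons gotz_nil comp_poly0 addr0 size_binpoly.
  by split => //; apply: lead_binpoly_gt0.
move: srt => /= /andP [hb hs].
have [hsz hld] := IH hs isT.
rewrite gotz_cons /=.
set p := binpoly _ _; set q := gotz _ \Po _.
have hq : size q = b'.+1 by rewrite /q size_comp_poly2 ?size_Xm1.
have hlq : 0 < lead_coef q.
  by rewrite /q lead_coef_comp ?size_Xm1 // lead_Xm1 expr1n mulr1.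
have hp : size p = b.+1 by rewrite size_binpoly.
have hlp : 0 < lead_coef p by apply: lead_binpoly_gt0.
rewrite /geqR leq_eqVlt in hb.
case/orP: hb => [/eqP eb | lt].
  subst b'.
  have hc : (p + q)`_b = lead_coef p + lead_coef q.
    by rewrite coefD !lead_coefE hp hq.
  have hcp : 0 < (p + q)`_b by rewrite hc addr_gt0.
  have hs1 : (size (p + q)%R <= b.+1)%N.
    by have := size_polyD p q; rewrite hp hq maxnn.
  have hs2 : (b < size (p + q)%R)%N.
    rewrite ltnNge; apply/negP => /leq_sizeP /(_ b (leqnn b)) h0.
    by rewrite h0 ltxx in hcp.
  have es : size (p + q) = b.+1 by apply/eqP; rewrite eqn_leq hs1 hs2.
  by split => //; rewrite lead_coefE es.
have hlt : (size q < size p)%N by rewrite hp hq.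
by rewrite size_polyDl // lead_coefDl.
Qed.

Lemma gotz_neq0 s : sorted geqR s -> s != [::] -> gotz s != 0.
Proof.
move=> h1 h2; have [hs _] := gotz_size h1 h2.
by rewrite -size_poly_eq0 hs.
Qed.

Lemma gotz_inj s t : sorted geqR s -> s != [::] -> sorted geqR t -> t != [::] ->
  gotz s = gotz t -> s = t.
Proof.
elim: s t => [|b s IH] [|b' t] // hs _ ht _ e.
have [h1 _] := gotz_size hs isT.
have [h2 _] := gotz_size ht isT.
rewrite e h2 /= in h1; case: h1 => eb; subst b'.
move: e; rewrite !gotz_cons => /addrI e.
have e' : gotz s = gotz t.
  have hX : ('X - 1) \Po ('X + 1) = 'X :> {poly rat}.
    by rewrite -polyC1 -polyCN comp_polyD comp_polyX comp_polyC polyCN; ring.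
  by rewrite -[gotz s]comp_polyXr -[gotz t]comp_polyXr -hX !comp_polyA e.
have hs' : sorted geqR s by move: hs => /= /path_sorted.
have ht' : sorted geqR t by move: ht => /= /path_sorted.
clear h2 hs ht e.
case: s t IH hs' ht' e' => [|a s] [|a' t] IH hs' ht' e' //.
- by move: (gotz_neq0 ht' isT); rewrite -e' gotz_nil eqxx.
- by move: (gotz_neq0 hs' isT); rewrite e' gotz_nil eqxx.
- by rewrite (IH (a' :: t)).
Qed.

Definition step (s : seq nat) (b : bool) := if b then map S s else rcons s 0%N.
Definition gt (u : seq bool) := foldl step [:: 0%N] u.

Lemma gt_rcons u b : gt (rcons u b) = step (gt u) b.
Proof. by rewrite /gt foldl_rcons. Qed.

Lemma gt_nil : gt [::] = [:: 0%N].
Proof. by []. Qed.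

Lemma step_valid s b : sorted geqR s -> s != [::] ->
  sorted geqR (step s b) && (step s b != [::]) /\ head 0%N (step s b) = (head 0%N s + b)%N.
Proof.
case: s => [|a s] // hs _; case: b => /=.
  rewrite addn1; split => //; rewrite andbT.
  change (sorted geqR (map S (a :: s))); rewrite sorted_map.
  by apply: sub_sorted hs => x y.
rewrite addn0; split => //; rewrite andbT rcons_path; move: hs => /= -> /=.
by rewrite /geqR.
Qed.

Lemma gt_valid u : sorted geqR (gt u) && (gt u != [::]).
Proof.
elim/last_ind: u => [|u b IH] //.
by rewrite gt_rcons; case/andP: IH => h1 h2; case: (step_valid b h1 h2).
Qed.

Lemma gt_head u b : head 0%N (gt (rcons u b)) = (head 0%N (gt u) + b)%N.
Proof.
rewrite gt_rcons; case/andP: (gt_valid u) => h1 h2.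
by case: (step_valid b h1 h2).
Qed.

Lemma zero_notin_map (s : seq nat) : 0%N \notin map S s.
Proof. by apply/mapP => -[x _]. Qed.

Lemma gt_inj : injective gt.
Proof.
move=> u; elim/last_ind: u => [|u b IH] w; elim/last_ind: w => [|w b' _] //.
- rewrite gt_rcons gt_nil; case: b' => /=.
    by move=> e; have := zero_notin_map (gt w); rewrite -e inE.
  move=> /(congr1 size); rewrite size_rcons /=; case/andP: (gt_valid w) => _.
  by case: (gt w).
- rewrite gt_rcons gt_nil; case: b => /=.
    by move=> e; have := zero_notin_map (gt u); rewrite e inE.
  move=> /(congr1 size); rewrite size_rcons /=; case/andP: (gt_valid u) => _.
  by case: (gt u).
rewrite !gt_rcons; case: b; case: b' => /= e.
- by rewrite (IH w) //; apply: (inj_map succn_inj).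
- by have := zero_notin_map (gt u); rewrite e mem_rcons inE eqxx.
- by have := zero_notin_map (gt w); rewrite -e mem_rcons inE eqxx.
- by rewrite (IH w) //; move: e => /eqP; rewrite eqseq_rcons => /andP [/eqP].
Qed.

Lemma sorted_last_min x y : sorted geqR (rcons x y) -> all (fun z => y <= z)%N (rcons x y).
Proof.
elim: x => [|a x IH] /=; first by rewrite leqnn.
case: x IH => [|a' x] IH /=.
  by move=> h; rewrite andbT /geqR in h; rewrite h leqnn.
move/andP => [ha hs]; have := IH hs => /= /andP [h1 h2].
by rewrite (leq_trans h1 ha) h1 h2.
Qed.

Lemma sumn_pred s : all (fun z => 0 < z)%N s -> sumn s = (sumn (map predn s) + size s)%N.
Proof.
elim: s => [|a s IH] //= /andP [ha hs].
by rewrite IH //; case: a ha => //= a _; rewrite addnS addSn addnA.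
Qed.

Lemma gt_surj s : sorted geqR s -> s != [::] -> exists u, gt u = s.
Proof.
move: {2}(sumn s + size s)%N (leqnn (sumn s + size s)%N) => n.
elim: n s => [|n IHn] s.
  by case: s => //= a s; rewrite addnS.
move=> hn hs hne.
case/lastP: s hn hs hne => [|x y] // hn hs _.
have hmin := sorted_last_min hs.
case: y hn hs hmin => [|y] hn hs hmin.
  case: x hn hs hmin => [|a x] hn hs hmin; first by exists [::].
  have hs' : sorted geqR (a :: x).
    by move: hs => /=; rewrite rcons_path => /andP [].
  have hlt : (sumn (a :: x) + size (a :: x) <= n)%N.
    move: hn; rewrite -cats1 sumn_cat size_cat /= addn0 addn1 addnS ltnS.
    by rewrite addn0.
  have [u hu] := IHn (a :: x) hlt hs' isT.
  by exists (rcons u false); rewrite gt_rcons hu.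
set s := rcons x y.+1 in hn hs hmin *.
have hpos : all (fun z => 0 < z)%N s.
  by apply: sub_all hmin => z /=; apply: leq_trans.
have es : s = map S (map predn s).
  rewrite -map_comp -[LHS]map_id; apply/eq_in_map => z hz /=.
  by rewrite prednK //; move/allP: hpos => /(_ z hz).
have hs' : sorted geqR (map predn s).
  have := hs; rewrite {1}es sorted_map.
  by apply: sub_sorted => a b.
have hne' : map predn s != [::] by rewrite /s; case: (x).
have hlt : (sumn (map predn s) + size (map predn s) <= n)%N.
  move: hn; rewrite (sumn_pred hpos) size_map.
  have : (0 < size s)%N by rewrite /s size_rcons.
  move=> h1 h2; rewrite -ltnS; apply: leq_trans h2.
  by rewrite -[X in (X < _)%N]addn0 ltn_add2l.
have [u hu] := IHn (map predn s) hlt hs' hne'.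
by exists (rcons u true); rewrite gt_rcons hu /= -es.
Qed.

Lemma degP_gotz s : sorted geqR s -> s != [::] -> degP (gotz s) = head 0%N s.
Proof. by move=> h1 h2; rewrite /degP (gotz_size h1 h2).1. Qed.

Definition fT (c : nat) (u : seq bool) : {poly rat} * nat :=
  (gotz (gt u), (c + head 0%N (gt u))%N).

Lemma fT_vertex c u : vertex c (fT c u).
Proof.
case/andP: (gt_valid u) => h1 h2; split => /=.
  by exists (gt u); split; [apply/eqP | split].
by rewrite degP_gotz.
Qed.

Lemma gotz_gt_inj u w : gotz (gt u) = gotz (gt w) -> u = w.
Proof.
case/andP: (gt_valid u) => h1 h2; case/andP: (gt_valid w) => h3 h4 e.
by apply: gt_inj; apply: gotz_inj.
Qed.

Lemma hedge_iff c u w : hedge c (fT c u) (fT c w) <-> exists b, w = rcons u b.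
Proof.
case/andP: (gt_valid u) => h1 h2.
split.
  case=> _ [e | [[s0 [[hs0 [hs0' e1]] e2]] _]].
    exists false; apply: gotz_gt_inj.
    by case: e => -> _; rewrite gt_rcons /= gotz_rcons0.
  have e0 : gt u = s0.
    by apply: gotz_inj => //; apply/eqP.
  exists true; apply: gotz_gt_inj.
  by rewrite [LHS]e2; have -> := gt_rcons u true; rewrite /= e0.
case=> b ->; split; first by apply: fT_vertex.
case: b.
  right; split; last by rewrite /fT /= gt_head addn1 addnS.
  exists (gt u); split; last by rewrite /fT /= gt_rcons.
  by split; [apply/eqP | split].
left; rewrite /fT /sigmaP gt_head addn0 gt_rcons /= gotz_rcons0.
by [].
Qed.

Theorem theorem4p1 (c : nat) (hc : (0 < c)%N) :
  exists f : seq bool -> {poly rat} * nat,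
    injective f /\
    (forall u, vertex c (f u)) /\
    (forall v, vertex c v -> exists u, f u = v) /\
    f [::] = (1, c) /\
    (forall u w, adj c (f u) (f w) <->
       ((exists b, w = rcons u b) \/ (exists b, u = rcons w b))).
Proof.
exists (fT c); split.
  by move=> u w [e _]; apply: gotz_gt_inj.
split; first by apply: fT_vertex.
split.
  case=> P n [[s [hs [hs' /= e]]] /= en].
  have hne : s != [::] by apply/eqP.
  have [u hu] := gt_surj hs' hne.
  exists u; rewrite /fT hu en e degP_gotz //.
split.
  by rewrite /fT /= gt_nil -[[:: 0%N]]/(rcons [::] 0%N) gotz_rcons0 gotz_nil addr0 addn0.
move=> u w; rewrite /adj !hedge_iff.
by [].
Qed.
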